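(* Let $m\geqslant 2$ and let $\theta_1,\dots,\theta_m\in\mathbb{R}$. Assume that there exist indices $i,j$ with $1\leqslant i<j\leqslant m$ such that $1,\theta_i,\theta_j$ are linearly independent over $\mathbb{Q}$. Then for every $\varepsilon>0$ and every $\alpha\in\mathbb{R}$ there exist $\pmb{x}=(x_1,\dots,x_m)\in\mathbb{Z}^m\setminus\{\pmb{0}\}$ and $y\in\mathbb{Z}$ such that $$\|\theta_1x_1+\dots+\theta_mx_m-\alpha\|<\frac{\varepsilon}{|\pmb{x}|}.$$
   Context: For $w\in\mathbb{R}$, $\|w\|=\min_{a\in\mathbb{Z}}|w-a|$ denotes the distance to the nearest integer. For $\pmb{x}\in\mathbb{R}^m$, $|\pmb{x}|=\max_{1\leqslant k\leqslant m}|x_k|$ is the sup-norm. (The integer $y$ is the integer nearest to $\theta_1x_1+\dots+\theta_mx_m-\alpha$, so that $|\theta_1x_1+\dots+\theta_mx_m-y-\alpha|=\|\theta_1x_1+\dots+\theta_mx_m-\alpha\|$.) *)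

(* Defs.v *)
From Stdlib Require Import Reals QArith Lra Lia ZArith.
Open Scope R_scope.

Definition Q_lin_indep3 (a b : R) : Prop :=
  forall p q r : Q, Q2R p + Q2R q * a + Q2R r * b = 0 ->
    p == 0%Q /\ q == 0%Q /\ r == 0%Q.

(* Sup norm of the integer vector (x_1,...,x_m) represented by x 0, ..., x (m-1). *)
Fixpoint supnorm (m : nat) (x : nat -> Z) : R :=
  match m with
  | O => 0
  | S k => Rmax (supnorm k x) (Rabs (IZR (x k)))
  end.

(* theta_1 x_1 + ... + theta_m x_m with 0-based indices. *)
Fixpoint linform (m : nat) (theta : nat -> R) (x : nat -> Z) : R :=
  match m with
  | O => 0
  | S k => linform k theta x + theta k * IZR (x k)
  end.

(* Main.v *)
Require Import Defs.
From Stdlib Require Import Reals QArith ZArith.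
From Stdlib Require Import Lra Lia Znumtheory Classical List.
Open Scope R_scope.

Lemma bezout_Z (a b : Z) : exists u v, (u*a + v*b = Z.gcd a b)%Z.
Proof. destruct (Zis_gcd_bezout _ _ _ (Zgcd_is_gcd a b)) as [u v H]. eauto. Qed.

Definition nint (t : R) : Z := (up (t + /2) - 1)%Z.

Lemma nint_spec (t : R) : Rabs (t - IZR (nint t)) <= /2.
Proof.
  unfold nint. destruct (archimed (t + /2)) as [H1 H2].
  rewrite minus_IZR. apply Rabs_le. lra.
Qed.

Definition fl (t : R) : Z := (up t - 1)%Z.
Lemma fl_spec (t : R) : IZR (fl t) <= t < IZR (fl t) + 1.
Proof. unfold fl. destruct (archimed t). rewrite minus_IZR. lra. Qed.

Lemma IZR_dist_ge1 (z w : Z) : z <> w -> 1 <= Rabs (IZR z - IZR w).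
Proof.
  intros H. rewrite <- minus_IZR. destruct (Z.lt_total z w) as [h|[h|h]]; [|lia|].
  - rewrite Rabs_left1. rewrite <- opp_IZR. apply IZR_le. lia. apply IZR_le; lia.
  - rewrite Rabs_right. apply IZR_le. lia. apply Rle_ge, IZR_le; lia.
Qed.

Definition dist (t : R) : R := Rabs (t - IZR (nint t)).

Lemma dist_le (t : R) (z : Z) : dist t <= Rabs (t - IZR z).
Proof.
  unfold dist. destruct (Z.eq_dec z (nint t)) as [->|h]. lra.
  pose proof (IZR_dist_ge1 _ _ h). pose proof (nint_spec t).
  assert (Rabs (IZR z - IZR (nint t)) <= Rabs (t - IZR z) + Rabs (t - IZR (nint t))).
  { replace (IZR z - IZR (nint t)) with (-(t - IZR z) + (t - IZR (nint t))) by ring.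
    eapply Rle_trans. apply Rabs_triang. rewrite Rabs_Ropp. lra. }
  lra.
Qed.

Lemma dist_le_half t : dist t <= /2.
Proof. apply nint_spec. Qed.

Lemma dist_nonneg t : 0 <= dist t.
Proof. apply Rabs_pos. Qed.

Lemma pigeon (K : nat) (f : nat -> nat) :
  (forall i, (i <= K)%nat -> (f i < K)%nat) ->
  exists i j, (i < j)%nat /\ (j <= K)%nat /\ f i = f j.
Proof.
  revert f. induction K as [|K IH]; intros f Hf.
  - specialize (Hf 0%nat (le_n 0)). lia.
  - destruct (classic (exists i, (i <= K)%nat /\ f i = f (S K))) as [[i [Hi Hfi]]|Hn].
    + exists i, (S K). split; [lia|]. split; [lia|]. exact Hfi.
    + set (g := fun i => if Nat.ltb (f (S K)) (f i) then (f i - 1)%nat else f i).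
      destruct (IH g) as [i [j [Hij [HjK Hg]]]].
      * intros i Hi. unfold g. assert (f i <> f (S K)) by (intro; apply Hn; eauto).
        pose proof (Hf i ltac:(lia)). pose proof (Hf (S K) (le_n _)).
        destruct (Nat.ltb_spec (f (S K)) (f i)); lia.
      * exists i, j. split; [lia|]. split; [lia|].
        assert (f i <> f (S K)) by (intro; apply Hn; exists i; split; [lia|auto]).
        assert (f j <> f (S K)) by (intro; apply Hn; exists j; split; [lia|auto]).
        unfold g in Hg.
        destruct (Nat.ltb_spec (f (S K)) (f i)); destruct (Nat.ltb_spec (f (S K)) (f j)); lia.
Qed.

Lemma fl_range (s : R) (N : nat) : 0 <= s < INR N -> (0 <= fl s < Z.of_nat N)%Z.
Proof.
  intros [H1 H2]. pose proof (fl_spec s) as [A B]. rewrite INR_IZR_INZ in H2.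
  split.
  - assert (-1 < fl s)%Z by (apply lt_IZR; lra). lia.
  - apply lt_IZR. lra.
Qed.

Lemma fl_eq_close (x y : R) : fl x = fl y -> Rabs (x - y) < 1.
Proof.
  intros H. pose proof (fl_spec x). pose proof (fl_spec y). rewrite H in *.
  apply Rabs_def1; lra.
Qed.

Definition frac (t : R) := t - IZR (fl t).
Lemma frac_range t : 0 <= frac t < 1.
Proof. unfold frac. pose proof (fl_spec t). lra. Qed.

Lemma INR_pos_inv (N : nat) : (1 <= N)%nat -> 0 < INR N.
Proof. intros. apply lt_0_INR. lia. Qed.

Definition cellv (N : nat) (t : R) (k : nat) : nat :=
  Z.to_nat (fl (INR N * frac (INR k * t))).

Lemma cellv_lt N t k : (1 <= N)%nat -> (cellv N t k < N)%nat.
Proof.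
  intros HN. unfold cellv. pose proof (frac_range (INR k * t)).
  pose proof (INR_pos_inv N HN).
  assert (0 <= INR N * frac (INR k * t) < INR N) by nra.
  pose proof (fl_range _ _ H1). lia.
Qed.

Lemma cellv_close N t i j : (1 <= N)%nat -> cellv N t i = cellv N t j ->
  Rabs ((INR j - INR i) * t - IZR (fl (INR j * t) - fl (INR i * t))) < / INR N.
Proof.
  intros HN H. unfold cellv in H.
  pose proof (frac_range (INR i * t)). pose proof (frac_range (INR j * t)).
  pose proof (INR_pos_inv N HN).
  assert (Hi: 0 <= INR N * frac (INR i * t) < INR N) by nra.
  assert (Hj: 0 <= INR N * frac (INR j * t) < INR N) by nra.
  pose proof (fl_range _ _ Hi). pose proof (fl_range _ _ Hj).
  assert (fl (INR N * frac (INR i * t)) = fl (INR N * frac (INR j * t))) by lia.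
  apply fl_eq_close in H5.
  unfold frac in H5. rewrite minus_IZR.
  replace (INR N * (INR i * t - IZR (fl (INR i * t))) -
         INR N * (INR j * t - IZR (fl (INR j * t)))) with
     (- (INR N * ((INR j - INR i) * t - (IZR (fl (INR j * t)) - IZR (fl (INR i * t))))))
     in H5 by ring.
  rewrite Rabs_Ropp, Rabs_mult, (Rabs_right (INR N)) in H5 by lra.
  apply (Rmult_lt_reg_l (INR N)). lra. rewrite Rinv_r by lra. lra.
Qed.

Lemma dir1 (t : R) (N : nat) : (1 <= N)%nat ->
  exists i m : Z, (1 <= i <= Z.of_nat N)%Z /\ Rabs (IZR i * t - IZR m) < / INR N.
Proof.
  intros HN. destruct (pigeon N (cellv N t)) as [i [j [Hij [HjN He]]]].
  { intros. apply cellv_lt; auto. }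
  pose proof (cellv_close N t i j HN He).
  exists (Z.of_nat j - Z.of_nat i)%Z, (fl (INR j * t) - fl (INR i * t))%Z.
  split. lia. rewrite minus_IZR, <- !INR_IZR_INZ. exact H.
Qed.

Lemma dir2 (a b : R) (N : nat) : (1 <= N)%nat ->
  exists i m1 m2 : Z, (1 <= i <= Z.of_nat (N * N))%Z /\
    Rabs (IZR i * a - IZR m1) < / INR N /\ Rabs (IZR i * b - IZR m2) < / INR N.
Proof.
  intros HN.
  destruct (pigeon (N*N) (fun k => N * cellv N a k + cellv N b k)%nat) as [i [j [Hij [HjN He]]]].
  { intros. pose proof (cellv_lt N a i HN). pose proof (cellv_lt N b i HN). nia. }
  pose proof (cellv_lt N a i HN). pose proof (cellv_lt N b i HN).
  pose proof (cellv_lt N a j HN). pose proof (cellv_lt N b j HN).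
  assert (E1 : cellv N a i = cellv N a j) by nia.
  assert (E2 : cellv N b i = cellv N b j) by nia.
  pose proof (cellv_close N a i j HN E1). pose proof (cellv_close N b i j HN E2).
  exists (Z.of_nat j - Z.of_nat i)%Z, (fl (INR j * a) - fl (INR i * a))%Z,
    (fl (INR j * b) - fl (INR i * b))%Z.
  split. lia. rewrite minus_IZR, <- !INR_IZR_INZ. split; assumption.
Qed.

Lemma minimizer (Q : Z) (f : Z -> R) : (1 <= Q)%Z ->
  exists q, (1 <= q <= Q)%Z /\ forall j, (1 <= j <= Q)%Z -> f q <= f j.
Proof.
  intros HQ. replace Q with (Z.of_nat (S (Z.to_nat (Q - 1)))) by lia.
  generalize (Z.to_nat (Q - 1)) as n. clear HQ Q.
  induction n as [|n IH].
  - exists 1%Z. split. lia. intros j Hj. replace j with 1%Z by lia. lra.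
  - destruct IH as [q [Hq Hm]].
    destruct (Rle_lt_dec (f q) (f (Z.of_nat (S (S n))))) as [h|h].
    + exists q. split. lia. intros j Hj.
      destruct (Z.eq_dec j (Z.of_nat (S (S n)))) as [->|hn]. exact h. apply Hm. lia.
    + exists (Z.of_nat (S (S n))). split. lia. intros j Hj.
      destruct (Z.eq_dec j (Z.of_nat (S (S n)))) as [->|hn]. lra.
      specialize (Hm j ltac:(lia)). lra.
Qed.

Definition indep (a b : R) : Prop :=
  forall x1 x2 y : Z, IZR x1 * a + IZR x2 * b - IZR y = 0 -> x1 = 0%Z /\ x2 = 0%Z.

Definition zeta (a b : R) (q : Z) := Rmax (dist (IZR q * a)) (dist (IZR q * b)).

Lemma dist_pos_of (t : R) : (forall z, t - IZR z <> 0) -> 0 < dist t.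
Proof.
  intros H. unfold dist. apply Rabs_pos_lt. apply H.
Qed.

Lemma zeta_pos a b q : indep a b -> (1 <= q)%Z -> 0 < zeta a b q.
Proof.
  intros Hi Hq. unfold zeta. eapply Rlt_le_trans; [|apply Rmax_l].
  apply dist_pos_of. intros z Hz. destruct (Hi q 0%Z z) as [h _].
  rewrite Rmult_0_l, Rplus_0_r. exact Hz. lia.
Qed.

Lemma finite_min (l : list (Z*Z)) (F : Z*Z -> R) :
  (forall z, In z l -> 0 < F z) -> exists c, 0 < c /\ forall z, In z l -> c <= F z.
Proof.
  induction l as [|z0 l IH]; intros H.
  - exists 1. split. lra. intros z [].
  - destruct IH as [c [Hc Hl]]. intros; apply H; right; auto.
    exists (Rmin c (F z0)). split. apply Rmin_glb_lt; auto. apply H; left; auto.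
    intros z [<-|Hz]. apply Rmin_r. eapply Rle_trans. apply Rmin_l. auto.
Qed.

Definition zrange (L : Z) : list Z := map (fun k => Z.of_nat k - L)%Z (seq 0 (Z.to_nat (2*L+1))).

Lemma in_zrange L x : (-L <= x <= L)%Z -> In x (zrange L).
Proof.
  intros H. unfold zrange. apply in_map_iff. exists (Z.to_nat (x + L)). split. lia.
  apply in_seq. lia.
Qed.

Lemma indep_lower a b (L : Z) : indep a b -> exists c, 0 < c /\
  forall x1 x2 y : Z, (x1 <> 0 \/ x2 <> 0)%Z -> (Z.abs x1 <= L)%Z -> (Z.abs x2 <= L)%Z ->
   c <= Rabs (IZR x1 * a + IZR x2 * b - IZR y).
Proof.
  intros Hi.
  destruct (finite_min (list_prod (zrange L) (zrange L))
     (fun z => if (Z.eqb (fst z) 0 && Z.eqb (snd z) 0)%bool then 1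
               else dist (IZR (fst z) * a + IZR (snd z) * b))) as [c [Hc Hm]].
  { intros [x1 x2] _. simpl.
    destruct (Z.eqb_spec x1 0); destruct (Z.eqb_spec x2 0); simpl; try lra;
    apply dist_pos_of; intros z Hz; destruct (Hi x1 x2 z Hz); lia. }
  exists c. split. auto. intros x1 x2 y Hnz H1 H2.
  specialize (Hm (x1, x2) ltac:(apply in_prod; apply in_zrange; lia)). simpl in Hm.
  destruct (Z.eqb_spec x1 0); destruct (Z.eqb_spec x2 0); simpl in Hm; try lia;
  (eapply Rle_trans; [exact Hm| apply dist_le]).
Qed.

Lemma zeta_le_int a b j m1 m2 :
  zeta a b j <= Rmax (Rabs (IZR j * a - IZR m1)) (Rabs (IZR j * b - IZR m2)).
Proof.
  unfold zeta. apply Rmax_lub.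
  - eapply Rle_trans. apply dist_le. apply Rmax_l.
  - eapply Rle_trans. apply dist_le. apply Rmax_r.
Qed.

Lemma zeta_eq a b q : zeta a b q =
  Rmax (Rabs (IZR q * a - IZR (nint (IZR q * a)))) (Rabs (IZR q * b - IZR (nint (IZR q * b)))).
Proof. reflexivity. Qed.

Lemma zeta_half a b q : zeta a b q <= /2.
Proof. unfold zeta. apply Rmax_lub; apply dist_le_half. Qed.

Lemma divide_split (a g : Z) : (g | a)%Z -> exists k, a = (k * g)%Z.
Proof. intros [k Hk]. eauto. Qed.

Lemma primitive a b Q q : indep a b -> (1 <= q <= Q)%Z ->
  (forall j, (1 <= j <= Q)%Z -> zeta a b q <= zeta a b j) ->
  forall r, exists x1 x2, (q | x1 * nint (IZR q * a) + x2 * nint (IZR q * b) - r)%Z.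
Proof.
  intros Hi Hq Hm r.
  set (p1 := nint (IZR q * a)). set (p2 := nint (IZR q * b)).
  set (g := Z.gcd (Z.gcd p1 p2) q).
  assert (Hg0 : (0 < g)%Z).
  { assert (0 <= g)%Z by apply Z.gcd_nonneg.
    assert (g <> 0)%Z. { intro h. apply Z.gcd_eq_0 in h. lia. } lia. }
  assert (Hg1 : g = 1%Z).
  { destruct (Z.eq_dec g 1) as [e|ne]; [exact e|exfalso].
    destruct (divide_split q g (Z.gcd_divide_r _ _)) as [q' Hq'].
    destruct (divide_split p1 g (Z.divide_trans _ _ _ (Z.gcd_divide_l _ _) (Z.gcd_divide_l _ _))) as [p1' H1].
    destruct (divide_split p2 g (Z.divide_trans _ _ _ (Z.gcd_divide_l _ _) (Z.gcd_divide_r _ _))) as [p2' H2].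
    assert (q' >= 1)%Z by nia.
    assert (q' <= Q)%Z by nia.
    specialize (Hm q' ltac:(lia)).
    pose proof (zeta_le_int a b q' p1' p2') as Hle.
    pose proof (zeta_pos a b q Hi ltac:(lia)) as Hpos.
    assert (Hz : zeta a b q = IZR g * Rmax (Rabs (IZR q' * a - IZR p1')) (Rabs (IZR q' * b - IZR p2'))).
    { rewrite zeta_eq. fold p1 p2. rewrite Hq', H1, H2, !mult_IZR.
      replace (IZR q' * IZR g * a - IZR p1' * IZR g) with (IZR g * (IZR q' * a - IZR p1')) by ring.
      replace (IZR q' * IZR g * b - IZR p2' * IZR g) with (IZR g * (IZR q' * b - IZR p2')) by ring.
      rewrite !Rabs_mult, (Rabs_right (IZR g)) by (apply Rle_ge, IZR_le; lia).
      apply RmaxRmult. apply IZR_le; lia. }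
    assert (Hg2 : 2 <= IZR g) by (apply IZR_le; lia).
    set (M := Rmax (Rabs (IZR q' * a - IZR p1')) (Rabs (IZR q' * b - IZR p2'))) in *.
    assert (HM: 0 < M) by nra. nra. }
  destruct (bezout_Z p1 p2) as [s [t Hst]].
  destruct (bezout_Z (Z.gcd p1 p2) q) as [u [v Huv]].
  fold g in Huv. rewrite Hg1 in Huv.
  exists (r * u * s)%Z, (r * u * t)%Z. exists (- r * v)%Z.
  rewrite <- Hst in Huv.
  transitivity (r * (u * (s * p1 + t * p2) + v * q) - r - r * v * q)%Z. ring.
  rewrite Huv. ring.
Qed.

Definition rmax2 (x1 x2 : Z) : R := Rmax (IZR (Z.abs x1)) (IZR (Z.abs x2)).

Lemma gcd_split (x1 x2 : Z) : (x1 <> 0 \/ x2 <> 0)%Z ->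
  exists g y1 y2, (0 < g)%Z /\ x1 = (y1 * g)%Z /\ x2 = (y2 * g)%Z /\ Z.gcd y1 y2 = 1%Z.
Proof.
  intros H. set (g := Z.gcd x1 x2).
  assert (0 < g)%Z.
  { assert (0 <= g)%Z by apply Z.gcd_nonneg.
    assert (g <> 0)%Z. { intro h. apply Z.gcd_eq_0 in h. lia. } lia. }
  exists g, (x1 / g)%Z, (x2 / g)%Z. split. auto.
  destruct (divide_split x1 g (Z.gcd_divide_l _ _)) as [k1 H1].
  destruct (divide_split x2 g (Z.gcd_divide_r _ _)) as [k2 H2].
  split. rewrite H1 at 2. rewrite Z.div_mul by lia. auto.
  split. rewrite H2 at 2. rewrite Z.div_mul by lia. auto.
  apply Z.gcd_div_gcd. lia. reflexivity.
Qed.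

Lemma abs_IZR_le (y g : Z) : (0 < g)%Z -> (y <> 0)%Z -> IZR g <= IZR (Z.abs (y * g)).
Proof. intros. apply IZR_le. nia. Qed.

Lemma balanced a b Q q : indep a b -> (1 <= q <= Q)%Z ->
  (forall j, (1 <= j <= Q)%Z -> zeta a b q <= zeta a b j) ->
  forall x1 x2, (x1 <> 0 \/ x2 <> 0)%Z ->
  (q | x1 * nint (IZR q * a) + x2 * nint (IZR q * b))%Z ->
  IZR q * zeta a b q / 6 <= rmax2 x1 x2.
Proof.
  intros Hi Hq Hm x1 x2 Hnz Hdiv.
  set (p1 := nint (IZR q * a)) in *. set (p2 := nint (IZR q * b)) in *.
  set (z := zeta a b q).
  assert (Hz : z = Rmax (Rabs (IZR q * a - IZR p1)) (Rabs (IZR q * b - IZR p2))) by reflexivity.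
  assert (Hzpos : 0 < z) by (apply zeta_pos; auto; lia).
  assert (Hzh : z <= /2) by apply zeta_half.
  assert (He1 : Rabs (IZR q * a - IZR p1) <= z) by (rewrite Hz; apply Rmax_l).
  assert (He2 : Rabs (IZR q * b - IZR p2) <= z) by (rewrite Hz; apply Rmax_r).
  apply Rnot_lt_le. intro Hlt.
  destruct (gcd_split x1 x2 Hnz) as [g [y1 [y2 [Hg [E1 [E2 Hgc]]]]]].
  assert (Hge : IZR g <= rmax2 x1 x2).
  { unfold rmax2. destruct Hnz as [h|h].
    - eapply Rle_trans; [|apply Rmax_l]. rewrite E1. apply abs_IZR_le; auto. intro; subst; lia.
    - eapply Rle_trans; [|apply Rmax_r]. rewrite E2. apply abs_IZR_le; auto. intro; subst; lia. }
  set (h := Z.gcd q g).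
  assert (Hh : (0 < h)%Z).
  { assert (0 <= h)%Z by apply Z.gcd_nonneg.
    assert (h <> 0)%Z. { intro e. apply Z.gcd_eq_0 in e. lia. } lia. }
  destruct (divide_split q h (Z.gcd_divide_l _ _)) as [q' Hq'].
  destruct (divide_split g h (Z.gcd_divide_r _ _)) as [g' Hg'].
  assert (Hqg : Z.gcd q' g' = 1%Z).
  { assert (q' = q / h)%Z by (rewrite Hq'; rewrite Z.div_mul; lia).
    assert (g' = g / h)%Z by (rewrite Hg'; rewrite Z.div_mul; lia).
    subst q' g'. apply Z.gcd_div_gcd. lia. reflexivity. }
  assert (Hq'1 : (1 <= q')%Z) by nia.
  destruct (Z.eq_dec q' 1) as [e1|ne1].
  - (* q divides g *)
    assert (h <= g)%Z by (apply Z.divide_pos_le; [lia|apply Z.gcd_divide_r]).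
    assert (IZR q <= IZR g) by (apply IZR_le; subst q'; lia).
    assert (1 <= IZR q) by (apply IZR_le; lia).
    nra.
  - assert (Hq'2 : (2 <= q')%Z) by lia.
    set (X := (y1 * p1 + y2 * p2)%Z).
    assert (HX : (q' | X)%Z).
    { apply Z.gauss with g'; auto.
      apply (Z.mul_divide_cancel_l _ _ h). lia.
      replace (h * q')%Z with q by (rewrite Hq'; ring).
      replace (h * (g' * X))%Z with (x1 * p1 + x2 * p2)%Z. auto.
      unfold X. rewrite E1, E2, Hg'. ring. }
    destruct (bezout_Z y1 y2) as [u [v Huv]]. rewrite Hgc in Huv.
    set (t0 := (u * p2 - v * p1)%Z).
    assert (HP1 : (q' | p1 + t0 * y2)%Z).
    { replace (p1 + t0 * y2)%Z with (u * X + p1 * (1 - (u * y1 + v * y2)))%Z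
        by (unfold X, t0; ring).
      rewrite Huv. replace (u * X + p1 * (1 - 1))%Z with (u * X)%Z by ring.
      apply Z.divide_mul_r. auto. }
    assert (HP2 : (q' | p2 - t0 * y1)%Z).
    { replace (p2 - t0 * y1)%Z with (v * X + p2 * (1 - (u * y1 + v * y2)))%Z
        by (unfold X, t0; ring).
      rewrite Huv. replace (v * X + p2 * (1 - 1))%Z with (v * X)%Z by ring.
      apply Z.divide_mul_r. auto. }
    destruct (divide_split _ _ HP1) as [P01 HP01].
    destruct (divide_split _ _ HP2) as [P02 HP02].
    set (N := Z.to_nat (q' / 2)).
    assert (HN1 : (1 <= N)%nat).
    { unfold N. assert (1 <= q' / 2)%Z by (apply Z.div_le_lower_bound; lia). lia. }
    assert (HN2 : (2 * Z.of_nat N <= q')%Z).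
    { unfold N. rewrite Z2Nat.id. apply Z.mul_div_le. lia.
      apply Z.div_pos; lia. }
    assert (HN3 : (q' <= 3 * Z.of_nat N)%Z).
    { unfold N. rewrite Z2Nat.id. 2: apply Z.div_pos; lia.
      pose proof (Z.mod_pos_bound q' 2 ltac:(lia)). pose proof (Z.div_mod q' 2 ltac:(lia)).
      assert (1 <= q' / 2)%Z by (apply Z.div_le_lower_bound; lia). lia. }
    destruct (dir1 (IZR t0 / IZR q') N HN1) as [i [m [Hi1 HD]]].
    set (j := (h * i)%Z).
    set (p1' := (i * P01 - m * y2)%Z). set (p2' := (i * P02 + m * y1)%Z).
    set (D := IZR i * (IZR t0 / IZR q') - IZR m) in *.
    assert (Hq'R : 0 < IZR q') by (apply IZR_lt; lia).
    assert (Hqeq : IZR q = IZR h * IZR q') by (rewrite Hq', mult_IZR; ring).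
    assert (HhR : 0 < IZR h) by (apply IZR_lt; lia).
    assert (Id1 : IZR j * a - IZR p1' = - D * IZR y2 + IZR i * (IZR q * a - IZR p1) / IZR q').
    { unfold D, j, p1'. rewrite mult_IZR, minus_IZR, !mult_IZR.
      assert (IZR p1 = IZR P01 * IZR q' - IZR t0 * IZR y2).
      { rewrite <- mult_IZR, <- mult_IZR, <- minus_IZR. f_equal. lia. }
      rewrite H, Hqeq. field. lra. }
    assert (Id2 : IZR j * b - IZR p2' = D * IZR y1 + IZR i * (IZR q * b - IZR p2) / IZR q').
    { unfold D, j, p2'. rewrite mult_IZR, plus_IZR, !mult_IZR.
      assert (IZR p2 = IZR P02 * IZR q' + IZR t0 * IZR y1).
      { rewrite <- mult_IZR, <- mult_IZR, <- plus_IZR. f_equal. lia. }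
      rewrite H, Hqeq. field. lra. }
    assert (HNR : 0 < INR N) by (apply lt_0_INR; lia).
    assert (HN3R : IZR q' <= 3 * INR N) by (rewrite INR_IZR_INZ, <- mult_IZR; apply IZR_le; lia).
    assert (HN2R : 2 * INR N <= IZR q') by (rewrite INR_IZR_INZ, <- mult_IZR; apply IZR_le; lia).
    assert (Hi1R : 1 <= IZR i) by (apply IZR_le; lia).
    assert (HiNR : IZR i <= INR N) by (rewrite INR_IZR_INZ; apply IZR_le; lia).
    assert (Hy : forall yk, (Z.abs yk <= Z.abs y1 \/ Z.abs yk <= Z.abs y2)%Z ->
                 Rabs D * Rabs (IZR yk) < z / 2).
    { intros yk Hyk.
      assert (Hyg : IZR (Z.abs yk) * IZR g <= rmax2 x1 x2).
      { rewrite <- mult_IZR. unfold rmax2. destruct Hyk.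
        - eapply Rle_trans; [|apply Rmax_l]. apply IZR_le. rewrite E1. nia.
        - eapply Rle_trans; [|apply Rmax_r]. apply IZR_le. rewrite E2. nia. }
      assert (HgR : IZR h <= IZR g).
      { apply IZR_le. apply Z.divide_pos_le. lia. apply Z.gcd_divide_r. }
      rewrite <- abs_IZR.
      assert (0 <= IZR (Z.abs yk)) by (apply IZR_le; lia).
      assert (Rabs D <= / INR N) by lra.
      assert (Rabs D * IZR (Z.abs yk) <= / INR N * IZR (Z.abs yk)) by (apply Rmult_le_compat_r; auto).
      assert (/ INR N * IZR (Z.abs yk) * IZR q <= 3 * IZR (Z.abs yk) * IZR g).
      { rewrite Hqeq.
        replace (/ INR N * IZR (Z.abs yk) * (IZR h * IZR q')) with
          (IZR (Z.abs yk) * IZR h * (IZR q' / INR N)) by (field; lra).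
        assert (IZR q' / INR N <= 3).
        { apply (Rmult_le_reg_r (INR N)). auto. unfold Rdiv. rewrite Rmult_assoc, Rinv_l; lra. }
        assert (0 <= IZR (Z.abs yk) * IZR h) by nra. nra. }
      assert (1 <= IZR q) by (apply IZR_le; lia).
      assert (/ INR N * IZR (Z.abs yk) * IZR q < IZR q * (z / 2)) by lra.
      nra. }
    assert (Heta : forall e, Rabs e <= z -> Rabs (IZR i * e / IZR q') <= z / 2).
    { intros e He. unfold Rdiv. rewrite !Rabs_mult, (Rabs_right (IZR i)) by lra.
      rewrite Rabs_inv. rewrite (Rabs_right (IZR q')) by lra.
      assert (IZR i * / IZR q' <= /2).
      { apply (Rmult_le_reg_r (IZR q')). auto. rewrite Rmult_assoc, Rinv_l; lra. }
      assert (0 <= IZR i * / IZR q') by (apply Rmult_le_pos; [lra| apply Rlt_le, Rinv_0_lt_compat; lra]).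
      pose proof (Rabs_pos e). nra. }
    assert (B1 : Rabs (IZR j * a - IZR p1') < z).
    { rewrite Id1. eapply Rle_lt_trans. apply Rabs_triang.
      rewrite Rabs_mult, Rabs_Ropp.
      pose proof (Hy y2 ltac:(lia)). pose proof (Heta _ He1). lra. }
    assert (B2 : Rabs (IZR j * b - IZR p2') < z).
    { rewrite Id2. eapply Rle_lt_trans. apply Rabs_triang.
      rewrite Rabs_mult.
      pose proof (Hy y1 ltac:(lia)). pose proof (Heta _ He2). lra. }
    assert (Hj : (1 <= j <= Q)%Z).
    { unfold j. split. nia. assert (h * i < q)%Z; [|lia].
      rewrite Hq'. assert (i <= Z.of_nat N)%Z by lia. nia. }
    specialize (Hm j Hj). pose proof (zeta_le_int a b j p1' p2').
    assert (Rmax (Rabs (IZR j * a - IZR p1')) (Rabs (IZR j * b - IZR p2')) < z)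
      by (apply Rmax_lub_lt; auto).
    fold z in Hm. lra.
Qed.

Lemma mod_eq_divide (a b q : Z) : (0 < q)%Z -> (a mod q = b mod q)%Z -> (q | a - b)%Z.
Proof.
  intros Hq H. exists (a / q - b / q)%Z.
  pose proof (Z.div_mod a q ltac:(lia)). pose proof (Z.div_mod b q ltac:(lia)). lia.
Qed.

Lemma short_vec (q p1 p2 : Z) : (1 <= q)%Z -> exists b1 b2, (b1 <> 0 \/ b2 <> 0)%Z /\
  (q | b1 * p1 + b2 * p2)%Z /\ (Z.abs b1 <= Z.sqrt q)%Z /\ (Z.abs b2 <= Z.sqrt q)%Z.
Proof.
  intros Hq. set (s := Z.sqrt q). pose proof (Z.sqrt_spec q ltac:(lia)) as Hs. fold s in Hs.
  assert (Hs0 : (0 <= s)%Z) by (apply Z.sqrt_nonneg).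
  set (X1 := fun k : nat => (Z.of_nat k / (s + 1))%Z).
  set (X2 := fun k : nat => (Z.of_nat k mod (s + 1))%Z).
  destruct (pigeon (Z.to_nat q) (fun k => Z.to_nat ((X1 k * p1 + X2 k * p2) mod q)))
    as [i [j [Hij [Hjq He]]]].
  { intros k Hk. pose proof (Z.mod_pos_bound (X1 k * p1 + X2 k * p2) q ltac:(lia)). lia. }
  pose proof (Z.mod_pos_bound (X1 i * p1 + X2 i * p2) q ltac:(lia)).
  pose proof (Z.mod_pos_bound (X1 j * p1 + X2 j * p2) q ltac:(lia)).
  assert (Hm : ((X1 j * p1 + X2 j * p2) mod q = (X1 i * p1 + X2 i * p2) mod q)%Z) by lia.
  apply mod_eq_divide in Hm; [|lia].
  assert (Hb : forall k : nat, (k <= Z.to_nat q)%nat ->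
     (0 <= X1 k <= s)%Z /\ (0 <= X2 k <= s)%Z /\ Z.of_nat k = ((s+1) * X1 k + X2 k)%Z).
  { intros k Hk. unfold X1, X2.
    pose proof (Z.div_mod (Z.of_nat k) (s+1) ltac:(lia)).
    pose proof (Z.mod_pos_bound (Z.of_nat k) (s+1) ltac:(lia)).
    split; [|split; [lia|lia]]. split. apply Z.div_pos; lia.
    assert (Z.of_nat k / (s+1) < s + 1)%Z by (apply Z.div_lt_upper_bound; [lia|]; assert (Z.of_nat k <= q)%Z by lia; unfold Z.succ in Hs; nia). lia. }
  destruct (Hb i ltac:(lia)) as [Ai [Bi Ci]]. destruct (Hb j Hjq) as [Aj [Bj Cj]].
  exists (X1 j - X1 i)%Z, (X2 j - X2 i)%Z. split.
  { destruct (Z.eq_dec (X1 j) (X1 i)); [right|left]; lia. }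
  split. replace ((X1 j - X1 i) * p1 + (X2 j - X2 i) * p2)%Z with
    (X1 j * p1 + X2 j * p2 - (X1 i * p1 + X2 i * p2))%Z by ring. auto.
  split; lia.
Qed.

Lemma Rabs_nint_le (t : R) : Rabs (t - IZR (nint t)) <= /2.
Proof. apply nint_spec. Qed.

Lemma div_le_inv x n l : 0 < n -> 0 < l -> x * l <= n -> x / n <= / l.
Proof.
  intros. apply (Rmult_le_reg_r (n * l)). nra.
  replace (x / n * (n * l)) with (x * l) by (field; lra).
  replace (/ l * (n * l)) with n by (field; lra). auto.
Qed.

Lemma cover (q p1 p2 : Z) (lam B : R) :
  (1 <= q)%Z -> (forall r, exists x1 x2, (q | x1 * p1 + x2 * p2 - r)%Z) -> 0 < lam ->
  (forall x1 x2, (x1 <> 0 \/ x2 <> 0)%Z -> (q | x1 * p1 + x2 * p2)%Z -> lam <= rmax2 x1 x2) ->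
  forall b1 b2, (b1 <> 0 \/ b2 <> 0)%Z -> (q | b1 * p1 + b2 * p2)%Z -> rmax2 b1 b2 <= B ->
  forall r P1 P2, exists x1 x2, (x1 <> 0 \/ x2 <> 0)%Z /\ (q | x1 * p1 + x2 * p2 - r)%Z /\
    Rabs (IZR x1 - P1) <= IZR q / (2 * lam) + 3 * B / 2 /\
    Rabs (IZR x2 - P2) <= IZR q / (2 * lam) + 3 * B / 2.
Proof.
  intros Hq Hprim Hlam Hlow b1 b2 Hbnz Hbd HbB r P1 P2.
  destruct (gcd_split b1 b2 Hbnz) as [g [c1 [c2 [Hg [E1 [E2 Hc]]]]]].
  set (A := (c1 * p1 + c2 * p2)%Z).
  set (d := Z.gcd A q).
  assert (Hd : (0 < d)%Z).
  { assert (0 <= d)%Z by apply Z.gcd_nonneg.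
    assert (d <> 0)%Z. { intro e. apply Z.gcd_eq_0 in e. lia. } lia. }
  destruct (divide_split q d (Z.gcd_divide_r _ _)) as [k0 Hk0].
  destruct (divide_split A d (Z.gcd_divide_l _ _)) as [A' HA'].
  assert (Hk0g : Z.gcd k0 A' = 1%Z).
  { assert (k0 = q / d)%Z by (rewrite Hk0, Z.div_mul; lia).
    assert (A' = A / d)%Z by (rewrite HA', Z.div_mul; lia).
    subst k0 A'. apply Z.gcd_div_gcd. lia. rewrite Z.gcd_comm. reflexivity. }
  assert (Hk0pos : (1 <= k0)%Z) by nia.
  assert (Hk0div : (k0 | g)%Z).
  { apply Z.gauss with A'; auto.
    apply (Z.mul_divide_cancel_r _ _ d). lia.
    rewrite <- Hk0. replace (A' * g * d)%Z with (b1 * p1 + b2 * p2)%Z. auto.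
    rewrite E1, E2. replace (A' * g * d)%Z with (g * (A' * d))%Z by ring. rewrite <- HA'.
    unfold A. ring. }
  assert (Hk0le : (k0 <= g)%Z) by (apply Z.divide_pos_le; auto).
  set (v11 := (k0 * c1)%Z). set (v12 := (k0 * c2)%Z).
  assert (Hv1nz : (v11 <> 0 \/ v12 <> 0)%Z).
  { unfold v11, v12. destruct Hbnz; [left|right]; nia. }
  assert (Hv1d : (q | v11 * p1 + v12 * p2)%Z).
  { exists A'. unfold v11, v12. rewrite Hk0.
    replace (k0 * c1 * p1 + k0 * c2 * p2)%Z with (k0 * A)%Z by (unfold A; ring).
    rewrite HA'. ring. }
  assert (Hv1B : rmax2 v11 v12 <= B).
  { eapply Rle_trans; [|exact HbB]. unfold rmax2, v11, v12. rewrite E1, E2.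
    apply Rmax_lub.
    eapply Rle_trans; [|apply Rmax_l]. apply IZR_le; rewrite !Z.abs_mul; nia.
    eapply Rle_trans; [|apply Rmax_r]. apply IZR_le; rewrite !Z.abs_mul; nia. }
  assert (Hv1l : lam <= rmax2 v11 v12) by auto.
  destruct (bezout_Z c1 c2) as [u [w Huw]]. rewrite Hc in Huw.
  set (S := (- w * p1 + u * p2)%Z).
  destruct (bezout_Z A q) as [s [t Hst]]. fold d in Hst.
  set (jj := (- S * s)%Z).
  set (v21 := (jj * c1 - d * w)%Z). set (v22 := (jj * c2 + d * u)%Z).
  assert (Hv2d : (q | v21 * p1 + v22 * p2)%Z).
  { exists (S * t)%Z.
    transitivity (jj * A + d * S)%Z. unfold v21, v22, A, S. ring.
    unfold jj. transitivity (S * (d - s * A))%Z. ring. rewrite <- Hst. ring. }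
  assert (Hdet : (v11 * v22 - v12 * v21 = q)%Z).
  { unfold v11, v12, v21, v22. rewrite Hk0.
    transitivity (k0 * d * (u * c1 + w * c2))%Z. ring. rewrite Huw. ring. }
  destruct (Hprim r) as [xr1 [xr2 Hxr]].
  set (V11 := IZR v11). set (V12 := IZR v12). set (V21 := IZR v21). set (V22 := IZR v22).
  set (R01 := P1 - IZR xr1). set (R02 := P2 - IZR xr2).
  assert (HqR : 1 <= IZR q) by (apply IZR_le; lia).
  set (t2 := nint ((V11 * R02 - V12 * R01) / IZR q)).
  set (R11 := R01 - IZR t2 * V21). set (R12 := R02 - IZR t2 * V22).
  set (Dt := V11 * R12 - V12 * R11).
  assert (HdetR : V11 * V22 - V12 * V21 = IZR q).
  { unfold V11, V12, V21, V22. rewrite <- !mult_IZR, <- minus_IZR. f_equal. auto. }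
  assert (HDt : Rabs Dt <= IZR q / 2).
  { pose proof (Rabs_nint_le ((V11 * R02 - V12 * R01) / IZR q)) as Hn. fold t2 in Hn.
    assert (Dt = IZR q * ((V11 * R02 - V12 * R01) / IZR q - IZR t2)).
    { transitivity ((V11 * R02 - V12 * R01) - IZR t2 * (V11 * V22 - V12 * V21)).
      unfold Dt, R11, R12. ring. rewrite HdetR. field. lra. }
    rewrite H, Rabs_mult, Rabs_right by lra.
    replace (IZR q / 2) with (IZR q * /2) by (unfold Rdiv; ring).
    apply Rmult_le_compat_l; lra. }
  set (n := V11 * V11 + V12 * V12).
  set (M1 := rmax2 v11 v12).
  assert (HM1 : M1 * M1 <= n).
  { unfold M1, rmax2, n, V11, V12. rewrite !abs_IZR.
    destruct (Rle_dec (Rabs (IZR v11)) (Rabs (IZR v12))).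
    - rewrite Rmax_right by auto. rewrite <- Rabs_mult, Rabs_right. nra. nra.
    - rewrite Rmax_left by lra. rewrite <- Rabs_mult, Rabs_right. nra. nra. }
  assert (HM1pos : lam <= M1) by auto.
  assert (Hnpos : 0 < n) by nra.
  set (mu := (R11 * V11 + R12 * V12) / n).
  set (t1 := nint mu).
  pose proof (Rabs_nint_le mu) as Hmu. fold t1 in Hmu.
  set (y1 := (xr1 + t2 * v21 + t1 * v11)%Z). set (y2 := (xr2 + t2 * v22 + t1 * v12)%Z).
  assert (Hy1 : P1 - IZR y1 = Dt / n * (- V12) + (mu - IZR t1) * V11).
  { unfold y1. rewrite !plus_IZR, !mult_IZR. fold V21 V11.
    unfold mu, Dt. unfold R11, R12, R01, R02 in *. unfold n in *. field. lra. }
  assert (Hy2 : P2 - IZR y2 = Dt / n * V11 + (mu - IZR t1) * V12).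
  { unfold y2. rewrite !plus_IZR, !mult_IZR. fold V22 V12.
    unfold mu, Dt. unfold R11, R12, R01, R02 in *. unfold n in *. field. lra. }
  assert (Hcomp : forall Vk, Rabs Vk <= M1 -> Rabs (Dt / n * Vk) <= IZR q / (2 * lam)).
  { intros Vk HVk. unfold Rdiv. rewrite !Rabs_mult, Rabs_inv, (Rabs_right n) by lra.
    assert (Rabs Vk * M1 <= n) by (pose proof (Rabs_pos Vk); nra).
    assert (Rabs Vk / n <= / lam).
    { apply div_le_inv; auto. pose proof (Rabs_pos Vk). nra. }
    pose proof (Rabs_pos Dt).
    replace (Rabs Dt * / n * Rabs Vk) with (Rabs Dt * (Rabs Vk / n)) by (unfold Rdiv; ring).
    replace (IZR q * / (2 * lam)) with (IZR q / 2 * / lam) by (field; lra).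
    apply Rmult_le_compat; auto. apply Rmult_le_pos. apply Rabs_pos.
    apply Rlt_le, Rinv_0_lt_compat; lra. }
  assert (HV11 : Rabs V11 <= M1) by (unfold V11, M1, rmax2; rewrite <- abs_IZR; apply Rmax_l).
  assert (HV12 : Rabs V12 <= M1) by (unfold V12, M1, rmax2; rewrite <- abs_IZR; apply Rmax_r).
  assert (HM1B : M1 <= B) by auto.
  assert (Hpar : forall Vk, Rabs Vk <= M1 -> Rabs ((mu - IZR t1) * Vk) <= B / 2).
  { intros Vk HVk. rewrite Rabs_mult. pose proof (Rabs_pos Vk). pose proof (Rabs_pos (mu - IZR t1)).
    nra. }
  assert (Hb1 : Rabs (IZR y1 - P1) <= IZR q / (2 * lam) + B / 2).
  { rewrite Rabs_minus_sym, Hy1. eapply Rle_trans. apply Rabs_triang.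
    pose proof (Hcomp (- V12) ltac:(rewrite Rabs_Ropp; auto)). pose proof (Hpar V11 HV11). lra. }
  assert (Hb2 : Rabs (IZR y2 - P2) <= IZR q / (2 * lam) + B / 2).
  { rewrite Rabs_minus_sym, Hy2. eapply Rle_trans. apply Rabs_triang.
    pose proof (Hcomp V11 HV11). pose proof (Hpar V12 HV12). lra. }
  assert (Hyd : (q | y1 * p1 + y2 * p2 - r)%Z).
  { replace (y1 * p1 + y2 * p2 - r)%Z with
      ((xr1 * p1 + xr2 * p2 - r) + t2 * (v21 * p1 + v22 * p2) + t1 * (v11 * p1 + v12 * p2))%Z
      by (unfold y1, y2; ring).
    apply Z.divide_add_r. apply Z.divide_add_r. auto.
    apply Z.divide_mul_r; auto. apply Z.divide_mul_r; auto. }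
  assert (HB0 : 0 <= B) by (eapply Rle_trans; [|exact HbB]; unfold rmax2;
     eapply Rle_trans; [|apply Rmax_l]; apply IZR_le; lia).
  destruct (classic (y1 = 0%Z /\ y2 = 0%Z)) as [[Z1 Z2]|Hnz].
  - exists (y1 + v11)%Z, (y2 + v12)%Z. split. lia. split.
    { replace ((y1 + v11) * p1 + (y2 + v12) * p2 - r)%Z with
        ((y1 * p1 + y2 * p2 - r) + (v11 * p1 + v12 * p2))%Z by ring.
      apply Z.divide_add_r; auto. }
    rewrite !plus_IZR. fold V11 V12.
    split.
    + replace (IZR y1 + V11 - P1) with ((IZR y1 - P1) + V11) by ring.
      eapply Rle_trans. apply Rabs_triang. lra.
    + replace (IZR y2 + V12 - P2) with ((IZR y2 - P2) + V12) by ring.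
      eapply Rle_trans. apply Rabs_triang. lra.
  - exists y1, y2. split. lia. split. auto. split; lra.
Qed.

Lemma rmax2_bound x1 x2 (K : R) : IZR (Z.abs x1) <= K -> IZR (Z.abs x2) <= K -> rmax2 x1 x2 <= K.
Proof. intros. unfold rmax2. apply Rmax_lub; auto. Qed.

Lemma main2 (a b : R) : indep a b -> forall eps alpha : R, 0 < eps ->
  exists x1 x2 y : Z, (x1 <> 0 \/ x2 <> 0)%Z /\
    Rabs (IZR x1 * a + IZR x2 * b - IZR y - alpha) * rmax2 x1 x2 < eps.
Proof.
  intros Hi eps alpha Heps.
  set (L := (up (50 / eps))%Z).
  destruct (archimed (50 / eps)) as [HL _]. fold L in HL.
  assert (H50 : 0 < 50 / eps) by (apply Rdiv_lt_0_compat; lra).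
  assert (HLpos : 0 < IZR L) by lra.
  assert (HL1 : (1 <= L)%Z) by (apply lt_IZR in HLpos; lia).
  assert (HLe : 50 / IZR L < eps).
  { apply (Rmult_lt_reg_r (IZR L)). auto. unfold Rdiv. rewrite Rmult_assoc, Rinv_l by lra.
    apply (Rmult_lt_reg_r (/ eps)). apply Rinv_0_lt_compat; lra.
    replace (eps * IZR L * / eps) with (IZR L) by (field; lra). lra. }
  destruct (indep_lower a b L Hi) as [c [Hc Hlow]].
  set (N := (Z.to_nat (up (2 * IZR L / c)) + 1)%nat).
  assert (HN1 : (1 <= N)%nat) by lia.
  assert (HNbig : 2 * IZR L / c < INR N).
  { destruct (archimed (2 * IZR L / c)) as [h _].
    unfold N. rewrite plus_INR, INR_IZR_INZ. simpl (INR 1).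
    assert (0 < 2 * IZR L / c) by (apply Rdiv_lt_0_compat; lra).
    assert (0 <= up (2 * IZR L / c))%Z by (apply le_IZR; lra).
    rewrite Z2Nat.id by lia. lra. }
  assert (HNpos : 0 < INR N) by (apply lt_0_INR; lia).
  set (Q := Z.of_nat (N * N)).
  assert (HQ1 : (1 <= Q)%Z) by (unfold Q; nia).
  destruct (dir2 a b N HN1) as [q0 [m1 [m2 [Hq0 [Hm1 Hm2]]]]].
  destruct (minimizer Q (zeta a b) HQ1) as [q [Hq Hmin]].
  set (z := zeta a b q).
  assert (Hzq0 : z < / INR N).
  { eapply Rle_lt_trans. apply (Hmin q0 Hq0). eapply Rle_lt_trans. apply zeta_le_int.
    apply Rmax_lub_lt; eauto. }
  assert (Hzpos : 0 < z) by (apply zeta_pos; auto; lia).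
  set (p1 := nint (IZR q * a)). set (p2 := nint (IZR q * b)).
  set (e1 := IZR q * a - IZR p1). set (e2 := IZR q * b - IZR p2).
  assert (Hz : z = Rmax (Rabs e1) (Rabs e2)) by reflexivity.
  assert (He1 : Rabs e1 <= z) by (rewrite Hz; apply Rmax_l).
  assert (He2 : Rabs e2 <= z) by (rewrite Hz; apply Rmax_r).
  assert (HqR : 1 <= IZR q) by (apply IZR_le; lia).
  pose proof (primitive a b Q q Hi Hq Hmin) as Hprim. fold p1 p2 in Hprim.
  set (lam := Rmax (IZR L) (IZR q * z / 6)).
  assert (Hlam0 : 0 < lam) by (eapply Rlt_le_trans; [exact HLpos| apply Rmax_l]).
  assert (HlamL : IZR L <= lam) by apply Rmax_l.
  assert (Hlamq : IZR q * z <= 6 * lam) by (pose proof (Rmax_r (IZR L) (IZR q * z / 6)); fold lam in H; lra).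
  assert (Hlowx : forall x1 x2, (x1 <> 0 \/ x2 <> 0)%Z -> (q | x1 * p1 + x2 * p2)%Z -> lam <= rmax2 x1 x2).
  { intros x1 x2 Hnz Hd. apply Rmax_lub.
    - apply Rnot_lt_le. intro Hlt.
      assert (Hx1 : (Z.abs x1 <= L)%Z).
      { apply le_IZR. eapply Rle_trans; [|apply Rlt_le; exact Hlt]. apply Rmax_l. }
      assert (Hx2 : (Z.abs x2 <= L)%Z).
      { apply le_IZR. eapply Rle_trans; [|apply Rlt_le; exact Hlt]. apply Rmax_r. }
      destruct Hd as [y Hy].
      specialize (Hlow x1 x2 y Hnz Hx1 Hx2).
      assert (Hid : IZR x1 * a + IZR x2 * b - IZR y = (IZR x1 * e1 + IZR x2 * e2) / IZR q).
      { unfold e1, e2. apply (Rmult_eq_reg_r (IZR q)). 2: lra.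
        unfold Rdiv. rewrite Rmult_assoc, Rinv_l, Rmult_1_r by lra.
        assert (IZR y * IZR q = IZR x1 * IZR p1 + IZR x2 * IZR p2).
        { rewrite <- mult_IZR, <- Hy, plus_IZR, !mult_IZR. ring. }
        transitivity (IZR x1 * (IZR q * a) + IZR x2 * (IZR q * b) - IZR y * IZR q). ring.
        rewrite H. ring. }
      rewrite Hid in Hlow.
      assert (Rabs (IZR x1 * e1 + IZR x2 * e2) <= 2 * IZR L * z).
      { eapply Rle_trans. apply Rabs_triang. rewrite !Rabs_mult, <- !abs_IZR.
        assert (IZR (Z.abs x1) <= IZR L) by (apply IZR_le; auto).
        assert (IZR (Z.abs x2) <= IZR L) by (apply IZR_le; auto).
        pose proof (Rabs_pos e1). pose proof (Rabs_pos e2).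
        assert (0 <= IZR (Z.abs x1)) by (apply IZR_le; lia).
        assert (0 <= IZR (Z.abs x2)) by (apply IZR_le; lia). nra. }
      assert (Rabs ((IZR x1 * e1 + IZR x2 * e2) / IZR q) <= 2 * IZR L * z).
      { unfold Rdiv. rewrite Rabs_mult, Rabs_inv, (Rabs_right (IZR q)) by lra.
        assert (0 < / IZR q <= 1).
        { split. apply Rinv_0_lt_compat; lra. rewrite <- Rinv_1. apply Rinv_le_contravar; lra. }
        pose proof (Rabs_pos (IZR x1 * e1 + IZR x2 * e2)). nra. }
      assert (2 * IZR L * z < c).
      { assert (2 * IZR L * z < 2 * IZR L * / INR N) by (apply Rmult_lt_compat_l; lra).
        assert (2 * IZR L * / INR N < c).
        { apply (Rmult_lt_reg_r (INR N)). auto. rewrite Rmult_assoc, Rinv_l by lra.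
          apply (Rmult_lt_reg_r (/ c)). apply Rinv_0_lt_compat; lra.
          replace (c * INR N * / c) with (INR N) by (field; lra). lra. }
        lra. }
      lra.
    - apply balanced with Q; auto. }
  destruct (short_vec q p1 p2 ltac:(lia)) as [b1 [b2 [Hbnz [Hbd [Hb1 Hb2]]]]].
  set (s := Z.sqrt q). fold s in Hb1, Hb2.
  pose proof (Z.sqrt_spec q ltac:(lia)) as Hs. cbv zeta in Hs. fold s in Hs. destruct Hs as [Hs1 Hs2].
  set (B := IZR s).
  assert (HbB : rmax2 b1 b2 <= B) by (apply rmax2_bound; apply IZR_le; auto).
  assert (HlamB : lam <= B) by (eapply Rle_trans; [apply Hlowx; eauto| auto]).
  assert (HBq : B * B <= IZR q) by (unfold B; rewrite <- mult_IZR; apply IZR_le; lia).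
  assert (HBl : B <= IZR q / lam).
  { apply (Rmult_le_reg_r lam). auto. unfold Rdiv. rewrite Rmult_assoc, Rinv_l by lra.
    assert (0 <= B) by lra. nra. }
  set (r := nint (IZR q * alpha)).
  set (beta := IZR q * alpha - IZR r).
  assert (Hbeta : Rabs beta <= /2) by apply nint_spec.
  assert (HP : exists P1 P2, P1 * e1 + P2 * e2 = beta /\ Rabs P1 <= / (2 * z) /\ Rabs P2 <= / (2 * z)).
  { destruct (Rle_dec (Rabs e2) (Rabs e1)) as [h|h].
    - assert (Hze : z = Rabs e1) by (rewrite Hz; apply Rmax_left; auto).
      assert (e1 <> 0) by (intro e; rewrite e, Rabs_R0 in Hze; lra).
      exists (beta / e1), 0. split. field. auto. split.
      + unfold Rdiv. rewrite Rabs_mult, Rabs_inv, <- Hze.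
        rewrite Rinv_mult. apply Rmult_le_compat_r. apply Rlt_le, Rinv_0_lt_compat; lra.
        lra.
      + rewrite Rabs_R0. apply Rlt_le, Rinv_0_lt_compat; lra.
    - assert (Hze : z = Rabs e2) by (rewrite Hz; apply Rmax_right; lra).
      assert (e2 <> 0) by (intro e; rewrite e, Rabs_R0 in Hze; lra).
      exists 0, (beta / e2). split. field. auto. split.
      + rewrite Rabs_R0. apply Rlt_le, Rinv_0_lt_compat; lra.
      + unfold Rdiv. rewrite Rabs_mult, Rabs_inv, <- Hze.
        rewrite Rinv_mult. apply Rmult_le_compat_r. apply Rlt_le, Rinv_0_lt_compat; lra.
        lra. }
  destruct HP as [P1 [P2 [HPb [HP1 HP2]]]].
  destruct (cover q p1 p2 lam B ltac:(lia) Hprim Hlam0 Hlowx b1 b2 Hbnz Hbd HbB r P1 P2)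
    as [x1 [x2 [Hxnz [Hxd [Hx1 Hx2]]]]].
  set (rho := IZR q / (2 * lam) + 3 * B / 2) in *.
  assert (Hrho : rho <= 2 * IZR q / lam).
  { unfold rho. replace (IZR q / (2 * lam)) with (IZR q / lam / 2) by (field; lra).
    replace (2 * IZR q / lam) with (2 * (IZR q / lam)) by (field; lra). lra. }
  assert (Hrho0 : 0 <= rho) by (pose proof (Rabs_pos (IZR x1 - P1)); lra).
  destruct Hxd as [y Hy].
  exists x1, x2, y. split. auto.
  assert (Hid : IZR x1 * a + IZR x2 * b - IZR y - alpha =
                ((IZR x1 - P1) * e1 + (IZR x2 - P2) * e2) / IZR q).
  { apply (Rmult_eq_reg_r (IZR q)). 2: lra.
    unfold Rdiv. rewrite Rmult_assoc, Rinv_l, Rmult_1_r by lra.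
    assert (IZR y * IZR q = IZR x1 * IZR p1 + IZR x2 * IZR p2 - IZR r).
    { rewrite <- mult_IZR, <- Hy, minus_IZR, plus_IZR, !mult_IZR. ring. }
    unfold e1, e2.
    transitivity (IZR x1 * (IZR q * a) + IZR x2 * (IZR q * b) - IZR y * IZR q - alpha * IZR q).
    ring. rewrite H.
    transitivity (IZR x1 * (IZR q * a - IZR p1) + IZR x2 * (IZR q * b - IZR p2) - beta).
    unfold beta. ring. fold e1 e2. rewrite <- HPb. ring. }
  assert (Herr : Rabs (IZR x1 * a + IZR x2 * b - IZR y - alpha) <= 2 * rho * z / IZR q).
  { rewrite Hid. unfold Rdiv. rewrite Rabs_mult, Rabs_inv, (Rabs_right (IZR q)) by lra.
    apply Rmult_le_compat_r. apply Rlt_le, Rinv_0_lt_compat; lra.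
    eapply Rle_trans. apply Rabs_triang. rewrite !Rabs_mult.
    pose proof (Rabs_pos (IZR x1 - P1)). pose proof (Rabs_pos (IZR x2 - P2)).
    pose proof (Rabs_pos e1). pose proof (Rabs_pos e2). nra. }
  assert (Hsize : rmax2 x1 x2 <= / (2 * z) + rho).
  { apply rmax2_bound; rewrite abs_IZR.
    - replace (IZR x1) with ((IZR x1 - P1) + P1) by ring.
      eapply Rle_trans. apply Rabs_triang. lra.
    - replace (IZR x2) with ((IZR x2 - P2) + P2) by ring.
      eapply Rle_trans. apply Rabs_triang. lra. }
  assert (Hr0 : 0 <= rmax2 x1 x2).
  { unfold rmax2. eapply Rle_trans; [|apply Rmax_l]. apply IZR_le. lia. }
  eapply Rle_lt_trans.
  { apply Rmult_le_compat. apply Rabs_pos. auto. exact Herr. exact Hsize. }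
  replace (2 * rho * z / IZR q * (/ (2 * z) + rho)) with
     (rho / IZR q + 2 * rho * rho * z / IZR q) by (field; lra).
  assert (A1 : rho / IZR q <= 2 / lam).
  { apply (Rmult_le_reg_r (IZR q)). lra. unfold Rdiv.
    rewrite Rmult_assoc, Rinv_l, Rmult_1_r by lra.
    replace (2 * / lam * IZR q) with (2 * IZR q / lam) by (field; lra). auto. }
  assert (A2 : 2 * rho * rho * z / IZR q <= 48 / lam).
  { assert (rho * rho <= (2 * IZR q / lam) * (2 * IZR q / lam)) by nra.
    assert (2 * rho * rho * z / IZR q <= 2 * ((2 * IZR q / lam) * (2 * IZR q / lam)) * z / IZR q).
    { unfold Rdiv. apply Rmult_le_compat_r. apply Rlt_le, Rinv_0_lt_compat; lra. nra. }
    eapply Rle_trans. exact H0.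
    replace (2 * (2 * IZR q / lam * (2 * IZR q / lam)) * z / IZR q) with
       (8 * (IZR q * z) / (lam * lam)) by (field; lra).
    apply (Rmult_le_reg_r (lam * lam)). nra. unfold Rdiv.
    rewrite Rmult_assoc, Rinv_l, Rmult_1_r by nra.
    replace (48 * / lam * (lam * lam)) with (48 * lam) by (field; lra). nra. }
  assert (50 / lam <= 50 / IZR L).
  { unfold Rdiv. apply Rmult_le_compat_l. lra. apply Rinv_le_contravar; lra. }
  assert (2 / lam + 48 / lam = 50 / lam) by (field; lra).
  lra.
Qed.

Definition xf (i j : nat) (x1 x2 : Z) : nat -> Z :=
  fun k => if Nat.eqb k i then x1 else if Nat.eqb k j then x2 else 0%Z.

Lemma linform_xf (theta : nat -> R) i j x1 x2 : (i < j)%nat -> forall n, (j < n)%nat ->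
  linform n theta (xf i j x1 x2) = theta i * IZR x1 + theta j * IZR x2.
Proof.
  intros Hij.
  assert (G : forall n, linform n theta (xf i j x1 x2) =
     (if Nat.ltb i n then theta i * IZR x1 else 0) + (if Nat.ltb j n then theta j * IZR x2 else 0)).
  { induction n as [|n IH].
    - simpl. ring.
    - simpl linform. rewrite IH. unfold xf.
      destruct (Nat.eqb_spec n i); destruct (Nat.eqb_spec n j);
      destruct (Nat.ltb_spec i n); destruct (Nat.ltb_spec j n);
      destruct (Nat.ltb_spec i (S n)); destruct (Nat.ltb_spec j (S n)); subst;
      try lia; try ring. }
  intros n Hn. rewrite G. destruct (Nat.ltb_spec i n); destruct (Nat.ltb_spec j n); try lia. ring.
Qed.

Lemma supnorm_xf i j x1 x2 : (i < j)%nat -> forall n, (j < n)%nat ->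
  supnorm n (xf i j x1 x2) = Rmax (Rabs (IZR x1)) (Rabs (IZR x2)).
Proof.
  intros Hij.
  assert (G : forall n, supnorm n (xf i j x1 x2) =
     if Nat.ltb j n then Rmax (Rabs (IZR x1)) (Rabs (IZR x2))
     else if Nat.ltb i n then Rabs (IZR x1) else 0).
  { pose proof (Rabs_pos (IZR x1)). pose proof (Rabs_pos (IZR x2)).
    induction n as [|n IH].
    - simpl. reflexivity.
    - simpl supnorm. rewrite IH. unfold xf.
      destruct (Nat.eqb_spec n i); destruct (Nat.eqb_spec n j);
      destruct (Nat.ltb_spec i n); destruct (Nat.ltb_spec j n);
      destruct (Nat.ltb_spec i (S n)); destruct (Nat.ltb_spec j (S n)); subst;
      try lia; rewrite ?Rabs_R0.
      all: try (rewrite Rmax_left; auto; apply Rmax_lub; lra).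
      all: try (rewrite Rmax_right; auto; lra).
      all: try (rewrite Rmax_left; auto; lra).
      all: try reflexivity.
      all: rewrite Rmax_left; [reflexivity|]; eapply Rle_trans; [|apply Rmax_l]; lra. }
  intros n Hn. rewrite G. destruct (Nat.ltb_spec j n); try lia. reflexivity.
Qed.

Lemma Q2R_inject (z : Z) : Q2R (inject_Z z) = IZR z.
Proof. unfold Q2R, inject_Z. simpl. field. Qed.

Lemma indep_of a b : Q_lin_indep3 a b -> indep a b.
Proof.
  intros H x1 x2 y Hz.
  destruct (H (inject_Z (- y)) (inject_Z x1) (inject_Z x2)) as [_ [H1 H2]].
  { rewrite !Q2R_inject, opp_IZR. lra. }
  unfold Qeq, inject_Z in H1, H2. simpl in H1, H2. lia.
Qed.

Theorem mainTheorem1 (m : nat) (theta : nat -> R) :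
  (2 <= m)%nat ->
  (exists i j : nat, (i < j)%nat /\ (j < m)%nat /\ Q_lin_indep3 (theta i) (theta j)) ->
  forall eps alpha : R, 0 < eps ->
    exists (x : nat -> Z) (y : Z),
      (exists k : nat, (k < m)%nat /\ x k <> 0%Z) /\
      Rabs (linform m theta x - IZR y - alpha) < eps / supnorm m x.
Proof.
  intros Hm [i [j [Hij [Hjm Hind]]]] eps alpha Heps.
  destruct (main2 (theta i) (theta j) (indep_of _ _ Hind) eps alpha Heps)
    as [x1 [x2 [y [Hnz Hb]]]].
  exists (xf i j x1 x2), y. split.
  { destruct (Z.eq_dec x1 0) as [e|ne].
    - exists j. split. auto. unfold xf. destruct (Nat.eqb_spec j i). lia.
      rewrite Nat.eqb_refl. lia.
    - exists i. split. lia. unfold xf. rewrite Nat.eqb_refl. auto. }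
  rewrite linform_xf, supnorm_xf by auto.
  unfold rmax2 in Hb. rewrite !abs_IZR in Hb.
  set (S := Rmax (Rabs (IZR x1)) (Rabs (IZR x2))) in *.
  assert (HS : 0 < S).
  { destruct Hnz as [h|h].
    - eapply Rlt_le_trans; [|apply Rmax_l]. apply Rabs_pos_lt. apply not_0_IZR. auto.
    - eapply Rlt_le_trans; [|apply Rmax_r]. apply Rabs_pos_lt. apply not_0_IZR. auto. }
  apply (Rmult_lt_reg_r S). auto. unfold Rdiv. rewrite Rmult_assoc, Rinv_l, Rmult_1_r by lra.
  replace (theta i * IZR x1 + theta j * IZR x2) with (IZR x1 * theta i + IZR x2 * theta j) by ring.
  exact Hb.
Qed.
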